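(* Let $n\ge 4$ and let $\mathcal{D}_n$ be a minimal complete DFA with state set $Q=\{0,\dots,n-1\}$, initial state $0$ and empty state $n-1$, accepting a suffix-free language, and let $T(n)$ be its transition semigroup. If no pair of states is colliding in $T(n)$, then $|T(n)|\le (n-1)^{n-2}+n-2$ and $T(n)$ is a subsemigroup of $\mathbf{W}_{\mathrm{sf}}(n)$.
   Context: A language $L$ is suffix-free if whenever $w\in L$ and $u\in L$ with $u$ a suffix of $w$, then $u=w$. Transformations act on the right ($qt$ is the image of $q$ under $t$). The transition semigroup of a DFA is the semigroup of transformations of its state set generated by the transformations induced by its letters. A minimal complete DFA of a suffix-free language with $n\ge 2$ states has exactly one empty state (a state from which no final state is reachable), labeled $n-1$. An unordered pair $\{p,q\}$ of distinct states of $Q\setminus\{0,n-1\}$ is colliding in $T(n)$ if there exist $t\in T(n)$ and $r\in Q\setminus\{0,n-1\}$ with $0t=p$ and $rt=q$. Define $\mathbf{B}_{\mathrm{sf}}(n)=\{t:Q\to Q \mid 0\notin Qt,\ (n-1)t=n-1,\ \text{and for all } j\ge1:\ 0t^j=n-1 \text{ or } 0t^j\neq qt^j \text{ for all } 0<q<n-1\}$ and $\mathbf{W}_{\mathrm{sf}}(n)=\{t\in\mathbf{B}_{\mathrm{sf}}(n)\mid 0t=n-1 \text{ or } qt=n-1 \text{ for all } 1\le q\le n-2\}$. *)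

(* Defs.v *)
From HB Require Import structures.
From mathcomp Require Import all_boot.
From mathcomp Require Import boolp.
Set Implicit Arguments. Unset Strict Implicit. Unset Printing Implicit Defensive.

(* A DFA with state set Q = 'I_n, alphabet a finType S,
   transition function d (complete), final states F.  Transformations act
   on the right: q(wa) = (qw)a. *)

Section DFA.
Variables (n : nat) (S : finType).

Definition is_init (q : 'I_n) : bool := val q == 0.
Definition is_empty_label (q : 'I_n) : bool := val q == n.-1.
Definition is_mid (q : 'I_n) : bool := (0 < val q) && (val q < n.-1).

Variable d : S -> 'I_n -> 'I_n.

Definition run (q : 'I_n) (w : seq S) : 'I_n := foldl (fun p a => d a p) q w.

Definition wordT (w : seq S) : {ffun 'I_n -> 'I_n} := [ffun q => run q w].

Definition transSemigroup : {set {ffun 'I_n -> 'I_n}} :=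
  [set t | `[< exists w : seq S, w != [::] /\ t = wordT w >]].

Variable F : {set 'I_n}.

Definition accepts (w : seq S) : bool := [exists q, is_init q && (run q w \in F)].

Definition suffix_free (L : seq S -> bool) : Prop :=
  forall w u, L w -> L u -> suffix u w -> u = w.

Definition minimal_dfa : Prop :=
  (forall q, exists w, exists2 z, is_init z & run z w = q) /\
  (forall p q, p != q -> exists w, (run p w \in F) != (run q w \in F)).

Definition is_empty_state (q : 'I_n) : Prop := forall w, run q w \notin F.

(* ordered version; the unordered pair {p,q} collides iff colliding p q or colliding q p *)
Definition colliding (p q : 'I_n) : Prop :=
  [/\ p != q, is_mid p, is_mid q &
     exists2 t, t \in transSemigroup &
       exists z r, [/\ is_init z, is_mid r, t z = p & t r = q]].
End DFA.

Definition in_Bsf (n : nat) (t : {ffun 'I_n -> 'I_n}) : Prop :=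
  [/\ (forall q, ~~ is_init (t q)),
      (forall q, is_empty_label q -> is_empty_label (t q)) &
      (forall j, 0 < j -> forall z, is_init z ->
          is_empty_label (iter j t z) \/
          forall q, is_mid q -> iter j t z != iter j t q)].

Definition in_Wsf (n : nat) (t : {ffun 'I_n -> 'I_n}) : Prop :=
  in_Bsf t /\
  (forall z, is_init z -> is_empty_label (t z) \/
     forall q, is_mid q -> is_empty_label (t q)).

Definition Wsf (n : nat) : {set {ffun 'I_n -> 'I_n}} := [set t | `[< in_Wsf t >]].

(* Main.v *)
Require Import Defs.
From mathcomp Require Import all_boot.
From mathcomp Require Import boolp.
From mathcomp Require Import zify.

Lemma run_cat (n : nat) (S : finType) (d : S -> 'I_n -> 'I_n) q u w :
  run d q (u ++ w) = run d (run d q u) w.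
Proof. by rewrite /run foldl_cat. Qed.

Theorem lemma2 (n : nat) (S : finType) (d : S -> 'I_n -> 'I_n) (F : {set 'I_n}) :
  4 <= n ->
  minimal_dfa d F ->
  (forall q : 'I_n, is_empty_label q -> is_empty_state d F q) ->
  suffix_free (accepts d F) ->
  (forall p q : 'I_n, ~ colliding d p q) ->
  #|transSemigroup d| <= (n.-1) ^ (n - 2) + n - 2 /\ transSemigroup d \subset Wsf n.
Proof.
move=> n4 [reachH distH] emptyH sfH collH.
have n0 : 0 < n by lia.
have nl : n.-1 < n by lia.
pose z0 : 'I_n := Ordinal n0.
pose zl : 'I_n := Ordinal nl.
have initE : forall q : 'I_n, is_init q -> q = z0.
  by move=> q /eqP h; apply: val_inj.
have emptyE : forall q : 'I_n, is_empty_label q -> q = zl.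
  by move=> q /eqP h; apply: val_inj.
have z0l : z0 != zl by apply/eqP => /(congr1 val) /=; lia.
have zlE : is_empty_label zl by rewrite /is_empty_label /= eqxx.
have zlF : forall w, run d zl w \notin F by apply: emptyH.
have reach : forall q, exists u, run d z0 u = q.
  move=> q; have [u [z /initE -> h]] := reachH q; by exists u.
have nonempty : forall q, q != zl -> exists v, run d q v \in F.
  move=> q qn; have [v hv] := distH _ _ qn; exists v.
  by move: hv; rewrite (negbTE (zlF v)); case: (_ \in F).
have accE : forall w, accepts d F w = (run d z0 w \in F).
  move=> w; apply/existsP/idP => [[q /andP [/initE -> //]]|h].
  by exists z0; rewrite h.
have runl : forall w, run d zl w = zl.
  move=> w; apply/eqP/negPn/negP => h.
  have [v hv] := nonempty _ h.
  by move: (zlF (w ++ v)); rewrite run_cat hv.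
have noinit : forall q w, w != [::] -> run d q w != z0.
  move=> q w wn; apply/eqP => h.
  have [u hu] := reach q.
  have [v hv] := nonempty z0 z0l.
  have := sfH (u ++ w ++ v) v.
  rewrite !accE !run_cat hu h hv catA => /(_ isT isT (suffix_suffix _ _)) /(congr1 size).
  rewrite !size_cat; move: wn; case: w {h} => //= a w _; lia.
have coll : forall q w, w != [::] -> is_mid q -> run d z0 w = run d q w ->
    run d z0 w = zl.
  move=> q w wn qm h; apply/eqP/negPn/negP => hn.
  have [v hv] := nonempty _ hn.
  have [u hu] := reach q.
  have := sfH (u ++ w ++ v) (w ++ v).
  rewrite !accE !run_cat hu -h hv => /(_ isT isT (suffix_suffix _ _)) /(congr1 size).
  rewrite !size_cat; case: u hu => [/= hu|a u _ /=]; last lia.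
  by move: qm; rewrite -hu /is_mid /=; lia.
have midE : forall q : 'I_n, [\/ q = z0, q = zl | is_mid q].
  move=> q; case: (ltnP 0 q) => h1; last by constructor 1; apply: val_inj => /=; lia.
  case: (ltnP q n.-1) => h2; first by constructor 3; rewrite /is_mid h1 h2.
  by constructor 2; apply: val_inj => /=; have := ltn_ord q; lia.
have inT : forall t, t \in transSemigroup d -> exists2 w, w != [::] & t = wordT d w.
  by move=> t; rewrite inE => /asboolP [w [wn ->]]; exists w.
have Wfact : forall t, t \in transSemigroup d ->
   [/\ forall q, t q != z0, t zl = zl, (forall q, is_mid q -> t z0 = t q -> t z0 = zl)
     & (t z0 != zl -> forall q, is_mid q -> t q = zl)].
  move=> t /inT [w wn ->].
  have A : forall q, is_mid q -> wordT d w z0 = wordT d w q -> wordT d w z0 = zl.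
    by move=> q qm; rewrite !ffunE; apply: coll.
  split => //.
  - by move=> q; rewrite ffunE noinit.
  - by rewrite ffunE runl.
  move=> h q qm; apply/eqP/negPn/negP => hq.
  have [e|e|pm] := midE (wordT d w z0).
  - by move: (noinit z0 w wn); rewrite ffunE in e; rewrite e eqxx.
  - by move: h; rewrite e eqxx.
  have [e|e|rm] := midE (wordT d w q).
  - by move: (noinit q w wn); rewrite ffunE in e; rewrite e eqxx.
  - by move: hq; rewrite e eqxx.
  case: (eqVneq (wordT d w z0) (wordT d w q)) => pr.
    by move: h; rewrite (A q qm pr) eqxx.
  apply: (collH _ _ (And4 pr pm rm _)).
  exists (wordT d w); first by rewrite inE; apply/asboolP; exists w.
  by exists z0, q.
split; last first.
  apply/subsetP => t tT; rewrite inE; apply/asboolP.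
  have [W1 W2 W3 W4] := Wfact t tT.
  split; last first.
    move=> z /initE ->; case: (eqVneq (t z0) zl) => h; first by left; rewrite h.
    by right => q qm; rewrite (W4 h q qm).
  split.
  - by move=> q; apply/negP => /initE; apply/eqP.
  - by move=> q /emptyE ->; rewrite W2.
  move=> j j0 z /initE ->.
  have [w wn Ew] : exists2 w, w != [::] & forall q, iter j t q = run d q w.
    case: j j0 => // j _; elim: j => [|j IH].
      by have [w wn ->] := inT _ tT; exists w => // q; rewrite /= ffunE.
    have [w wn Ew] := IH; have [w' _ Et] := inT _ tT.
    exists (w ++ w'); first by move: wn; case: (w).
    by move=> q; rewrite iterS Ew Et ffunE run_cat.
  case: (eqVneq (iter j t z0) zl) => h; first by left; rewrite h.
  right => q qm; apply/negP => /eqP e.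
  by move: h; rewrite !Ew in e *; rewrite (coll q w wn qm e) eqxx.
have n1 : 1 < n by lia.
have m1 : is_mid (Ordinal n1) by rewrite /is_mid /=; lia.
pose M := {q : 'I_n | is_mid q}.
pose N := {q : 'I_n | q != z0}.
have zl0 : zl != z0 by rewrite eq_sym.
pose md : M := exist _ (Ordinal n1) m1.
pose nd : N := exist _ zl zl0.
pose enc (t : {ffun 'I_n -> 'I_n}) : ({ffun M -> N} + M)%type :=
  if t z0 == zl then inl [ffun m : M => insubd nd (t (val m))]
  else inr (insubd md (t z0)).
have midz : forall q, is_mid q -> q != z0.
  by move=> q qm; apply/eqP => e; move: qm; rewrite e /is_mid /=; lia.
have midl : forall q, is_mid q -> q != zl.
  by move=> q qm; apply/eqP => e; move: qm; rewrite e /is_mid /=; lia.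
have encI : {in transSemigroup d &, injective enc}.
  move=> t1 t2 T1 T2; have [A1 B1 C1 D1] := Wfact _ T1; have [A2 B2 C2 D2] := Wfact _ T2.
  rewrite /enc; case: eqP => h1; case: eqP => h2.
  2,3: by move=> hh; discriminate hh.
  - move=> [] /ffunP E; apply/ffunP => q.
    have [->|->|qm] := midE q; first by rewrite h1 h2.
      by rewrite B1 B2.
    have := congr1 val (E (exist _ q qm)); rewrite !ffunE /=.
    by rewrite (insubdK nd (A1 q)) (insubdK nd (A2 q)).
  - have m1' : is_mid (t1 z0).
      have [e|e|//] := midE (t1 z0); [by move: (A1 z0); rewrite e eqxx|by move: h1; rewrite e].
    have m2' : is_mid (t2 z0).
      have [e|e|//] := midE (t2 z0); [by move: (A2 z0); rewrite e eqxx|by move: h2; rewrite e].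
    move=> [] /(congr1 val); rewrite (insubdK md m1') (insubdK md m2') => E.
    apply/ffunP => q.
    have [->|->|qm] := midE q; first by [].
      by rewrite B1 B2.
    by rewrite (D1 (introN eqP h1) q qm) (D2 (introN eqP h2) q qm).
have cN : #|{: N}| = n.-1.
  by rewrite card_sig; have := cardC1 z0; rewrite card_ord => <-; apply: eq_card.
have cM : #|{: M}| = n - 2.
  rewrite card_sig.
  have := cardD1 zl (predC1 z0); rewrite cardC1 card_ord inE zl0 add1n => e.
  have -> : n - 2 = n.-1.-1 by lia.
  rewrite e /=; apply: eq_card => q; rewrite !inE.
  apply/idP/andP => [qm|[ql qz]]; first by split; [apply: midl|apply: midz].
  rewrite /is_mid; have := ltn_ord q.
  move: ql qz => /eqP ql /eqP qz.
  have h1 : (q : nat) <> n.-1 by move=> e'; apply: ql; apply: val_inj.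
  have h2 : (q : nat) <> 0 by move=> e'; apply: qz; apply: val_inj.
  move=> hq; have hh : 0 < (q : nat) < n.-1 by apply/andP; split; lia.
  exact: hh.
rewrite -(card_in_imset encI).
apply: leq_trans (max_card _) _.
rewrite card_sum card_ffun cN cM addnBA //; lia.
Qed.
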